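(* Let $t<u$ be $b$-imal numbers in $[0,1]$ and let $l'\ge0$ be such that $b^{l'}t$ and $b^{l'}u$ are integers. Then for every $k\ge l'$, $\mu_k([t,u))=b(u-t)$. Moreover, for every interval $I\subset[0,1)$, $\lim_{k\to\infty}\mu_k(I)=b\,|I|$, where $|I|=\sup I-\inf I$.
   Context: Fix $b\ge2$ and $d\in\{0,\dots,b-1\}$. A $b$-imal number is an element of $\bigcup_{l\ge0}b^{-l}\mathbb Z$. A string is a finite sequence $X=(d_l,\dots,d_1)$ of digits in $\{0,\dots,b-1\}$ (leading zeros allowed), of length $|X|=l\ge0$; its value is $n(X)=\sum_{i=1}^{l}d_ib^{i-1}$ ($0$ for the empty string). For $k\ge0$, $\mu_k=\sum_{X}b^{-|X|}\delta_{n(X)/b^{|X|}}$, the sum over all strings $X$ containing $d$ exactly $k$ times (masses at the same point add); it is a measure on $[0,1)$ of total mass $b$. *)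

(* Defs.v *)
From HB Require Import structures.
From mathcomp Require Import all_boot all_order all_algebra.
From mathcomp Require Import all_classical all_reals all_analysis.
Set Implicit Arguments. Unset Strict Implicit. Unset Printing Implicit Defensive.
Import Order.TTheory GRing.Theory Num.Theory.
Local Open Scope ring_scope.
Local Open Scope classical_set_scope.

(* A string of length l over the digits {0,..,b-1} is X = (d_l, ..., d_1),
   represented as an l-tuple whose i-th entry (i = 0..l-1) is d_{l-i}. *)

Definition strval (b l : nat) (X : l.-tuple 'I_b) : nat :=
  \sum_(i < l) (tnth X i : nat) * b ^ (l.-1 - i).

Definition mu_term (R : realType) (b : nat) (d : 'I_b) (k : nat) (A : set R)
    (l : nat) : R :=
  \sum_(X : l.-tuple 'I_b | count_mem d X == k)
     ((b%:R ^- l) * \1_A ((strval X)%:R / b%:R ^+ l)).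

Definition mu (R : realType) (b : nat) (d : 'I_b) (k : nat) (A : set R)
  : \bar R :=
  (\sum_(0 <= l <oo) (mu_term d k A l)%:E)%E.

Definition ilength (R : realType) (I : interval R) : R :=
  sup [set` I] - inf [set` I].

(* Main.v *)
Require Import Defs.
From HB Require Import structures.
From mathcomp Require Import all_boot all_order all_algebra.
From mathcomp Require Import all_classical all_reals all_analysis.
From mathcomp Require Import zify ring lra.
Import Order.TTheory GRing.Theory Num.Theory.
Local Open Scope ring_scope.
Local Open Scope classical_set_scope.



Lemma strval_cons (b l : nat) (e : 'I_b) (Y : l.-tuple 'I_b) :
  strval (cons_tuple e Y) = (e * b ^ l + strval Y)%N.
Proof.
rewrite /strval big_ord_recl /=; congr (_ * _ + _)%N.
  by rewrite subn0.
apply: eq_bigr => i _; rewrite /bump /= subnDA subn1; congr (_ * _)%N.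
by rewrite !(tnth_nth e).
Qed.

Lemma strval_lt (b l : nat) (X : l.-tuple 'I_b) : (strval X < b ^ l)%N.
Proof.
elim: l X => [|l IH] X.
  by rewrite /strval big_ord0 expn0.
case/tupleP: X => e Y; rewrite strval_cons expnS.
have := IH Y; have := ltn_ord e; nia.
Qed.

Lemma big_tuple_cons (R : realType) (T : finType) (l : nat)
  (P : pred ((l.+1).-tuple T)) (F : (l.+1).-tuple T -> R) :
  \sum_(X : (l.+1).-tuple T | P X) F X =
  \sum_(e : T) \sum_(Y : l.-tuple T | P (cons_tuple e Y)) F (cons_tuple e Y).
Proof.
rewrite pair_big_dep /=.
rewrite (reindex (fun p : T * l.-tuple T => cons_tuple p.1 p.2)) //=.
exists (fun X => (thead X, behead_tuple X)) => [[e Y] _|X _] /=.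
  by rewrite theadE; congr pair; apply: val_inj.
by rewrite [RHS]tuple_eta.
Qed.

Definition shiftA (R : realType) (b : nat) (e : nat) (A : set R) : set R :=
  [set y | A ((e%:R + y) / b%:R)].
Arguments shiftA {R}.

Lemma indic_shift (R : realType) (b e : nat) (A : set R) (y : R) :
  \1_(shiftA b e A) y = \1_A ((e%:R + y) / b%:R) :> R.
Proof. by rewrite /indic /shiftA; congr (_%:R); rewrite !inE. Qed.

Lemma term_cons (R : realType) (b : nat) (A : set R) l (e : 'I_b)
  (Y : l.-tuple 'I_b) : (0 < b)%N ->
  (b%:R ^- l.+1 * \1_A ((strval (cons_tuple e Y))%:R / b%:R ^+ l.+1) : R)
  = b%:R^-1 * (b%:R ^- l * \1_(shiftA b e A) ((strval Y)%:R / b%:R ^+ l)).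
Proof.
move=> b0; rewrite indic_shift strval_cons natrD natrM natrX.
have bn0 : (b%:R : R) != 0 by rewrite pnatr_eq0 -lt0n.
rewrite exprS invfM mulrA; congr (_ * \1_A _).
field; by rewrite bn0 expf_neq0.
Qed.

Lemma mu_term_ge0 (R : realType) (b : nat) (d : 'I_b) k (A : set R) l :
  0 <= mu_term d k A l.
Proof.
apply: sumr_ge0 => X _; apply: mulr_ge0; first by rewrite invr_ge0 exprn_ge0.
by rewrite /indic ler0n.
Qed.

Lemma mu_term_0 (R : realType) (b : nat) (d : 'I_b) k (A : set R) :
  mu_term d k A 0 = (k == 0)%:R * \1_A 0.
Proof.
rewrite /mu_term big_mkcond /= (big_pred1 [tuple]); last first.
  by move=> X; rewrite [X]tuple0 /= eqxx.
rewrite /= eq_sym; case: (k == 0)%N; rewrite ?mul0r ?mul1r //.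
by rewrite /strval big_ord0 expr0 invr1 !mul1r mul0r.
Qed.

Lemma mu_term_S (R : realType) (b : nat) (d : 'I_b) k (A : set R) l :
  (0 < b)%N ->
  mu_term d k A l.+1 = b%:R^-1 * \sum_(e : 'I_b)
    (if e == d then (if k is k'.+1 then mu_term d k' (shiftA b e A) l else 0)
     else mu_term d k (shiftA b e A) l).
Proof.
move=> b0; rewrite /mu_term big_tuple_cons mulr_sumr; apply: eq_bigr => e _.
case: (eqVneq e d) => [-> | ne] /=.
  case: k => [|k].
    by rewrite big_pred0 ?mulr0 // => Y; rewrite eqxx add1n.
  rewrite mulr_sumr; apply: eq_big => Y; first by rewrite eqxx add1n eqSS.
  by move=> _; rewrite term_cons.
rewrite mulr_sumr; apply: eq_big => Y; first by rewrite (negbTE ne) add0n.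
by move=> _; rewrite term_cons.
Qed.

Lemma mu_S (R : realType) (b : nat) (d : 'I_b) k (A : set R) :
  (0 < b)%N ->
  mu d k A = ((mu_term d k A 0)%:E + (b%:R^-1)%:E * \sum_(e : 'I_b)
    (if e == d then (if k is k'.+1 then mu d k' (shiftA b e A) else 0)
     else mu d k (shiftA b e A)))%E.
Proof.
move=> b0; rewrite /mu nneseries_recl //; last by move=> l _; rewrite lee_fin mu_term_ge0.
congr (_ + _)%E.
rewrite -(@nneseries_addn _ (fun l => (mu_term d k A l)%:E) 1%N); last first.
  by move=> l; rewrite lee_fin mu_term_ge0.
under eq_eseriesr => l _ do rewrite addn1 mu_term_S // EFinM -sumEFin.
rewrite nneseriesZl; last first.
  move=> l _; apply: sume_ge0 => e _; rewrite lee_fin.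
  by case: ifP => _; [case: k => [|k]|]; rewrite ?mu_term_ge0.
congr (_ * _)%E; rewrite nneseries_sum; last first.
  by move=> e l _; rewrite lee_fin; case: ifP => _; [case: k => [|k]|]; rewrite ?mu_term_ge0.
apply: eq_bigr => e _; case: ifP => _ //.
by case: k => [|k] //; rewrite eseries0.
Qed.

Lemma val01 (R : realType) (b l : nat) (X : l.-tuple 'I_b) : (0 < b)%N ->
  0 <= (strval X)%:R / b%:R ^+ l :> R /\ (strval X)%:R / b%:R ^+ l < 1 :> R.
Proof.
move=> b0; have bl : 0 < b%:R ^+ l :> R by rewrite exprn_gt0 // ltr0n.
split; first by rewrite divr_ge0 // ltW.
by rewrite ltr_pdivrMr // mul1r -natrX ltr_nat strval_lt.
Qed.

Lemma mu_term_le (R : realType) (b : nat) (d : 'I_b) k (A B : set R) l :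
  (0 < b)%N -> (forall x, 0 <= x -> x < 1 -> A x -> B x) ->
  mu_term d k A l <= mu_term d k B l.
Proof.
move=> b0 AB; apply: ler_sum => X _; apply: ler_wpM2l.
  by rewrite invr_ge0 exprn_ge0.
have [h0 h1] := @val01 R b l X b0.
rewrite /indic; case: (boolP (_ \in A)) => [/set_mem /(AB _ h0 h1) HB|_].
  by rewrite mem_set.
by rewrite ler0n.
Qed.

Lemma mu_term_ext (R : realType) (b : nat) (d : 'I_b) k (A B : set R) l :
  (0 < b)%N -> (forall x, 0 <= x -> x < 1 -> (A x <-> B x)) ->
  mu_term d k A l = mu_term d k B l.
Proof.
move=> b0 AB; apply/le_anti/andP; split; apply: mu_term_le => // x h0 h1;
  by case: (AB x h0 h1).
Qed.

Lemma mu_le (R : realType) (b : nat) (d : 'I_b) k (A B : set R) :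
  (0 < b)%N -> (forall x, 0 <= x -> x < 1 -> A x -> B x) ->
  (mu d k A <= mu d k B)%E.
Proof.
move=> b0 AB; apply: lee_nneseries => l *; rewrite ?lee_fin ?mu_term_ge0 //.
exact: mu_term_le.
Qed.

Lemma mu_ext (R : realType) (b : nat) (d : 'I_b) k (A B : set R) :
  (0 < b)%N -> (forall x, 0 <= x -> x < 1 -> (A x <-> B x)) ->
  mu d k A = mu d k B.
Proof.
move=> b0 AB; rewrite /mu; apply: eq_eseriesr => l _.
by rewrite (@mu_term_ext R b d k A B l b0 AB).
Qed.

Lemma mu_ge0 (R : realType) (b : nat) (d : 'I_b) k (A : set R) :
  (0 <= mu d k A)%E.
Proof. by apply: nneseries_ge0 => l _ _; rewrite lee_fin mu_term_ge0. Qed.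

Lemma mu_set0 (R : realType) (b : nat) (d : 'I_b) k (A : set R) :
  (0 < b)%N -> (forall x, 0 <= x -> x < 1 -> ~ A x) -> mu d k A = 0%E.
Proof.
move=> b0 HA; apply/le_anti/andP; split; last exact: mu_ge0.
rewrite (@mu_ext R b d k A set0 b0) //; last by move=> x h0 h1; split => // /HA; apply.
rewrite /mu eseries0 // => l _ _; rewrite /mu_term big1 // => X _.
by rewrite indicE in_set0 mulr0.
Qed.

Lemma sum_if (R : realType) (b : nat) (d : 'I_b) (x y : R) :
  \sum_(e : 'I_b) (if e == d then x else y) = x + (b.-1)%:R * y.
Proof.
rewrite (bigD1 d) //= eqxx; congr (_ + _).
rewrite (eq_bigr (fun _ => y)); last by move=> e /negbTE ->.
rewrite (eq_bigl (fun e => e \in predC1 d)) // sumr_const cardC1 card_ord.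
by rewrite mulr_natl.
Qed.


Lemma shift01 (R : realType) (b : nat) (e : 'I_b) (x : R) :
  0 <= x -> x < 1 -> (shiftA b e `[0, 1[ x <-> `[0, 1[ x).
Proof.
move=> h0 h1; rewrite /shiftA /= !in_itv /= h0 h1; split => // _.
have b0 : (0 < b)%N by case: e => /= e' he; lia.
have bR : 0 < b%:R :> R by rewrite ltr0n.
have eb : (e%:R : R) + 1 <= b%:R by rewrite -(natrD R e 1) ler_nat addn1; case: e.
apply/andP; split; first by rewrite divr_ge0 // ?ler0n ?addr_ge0 // ltW.
by rewrite ltr_pdivrMr // mul1r; lra.
Qed.

Lemma term_shift01 (R : realType) (b : nat) (d : 'I_b) k (e : 'I_b) l :
  mu_term d k (shiftA b e (`[0, 1[ : set R)) l = mu_term d k `[0, 1[ l.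
Proof.
have b0 : (0 < b)%N by case: e => /= e' he; lia.
by apply: mu_term_ext => // x h0 h1; apply: shift01.
Qed.

Lemma term01_0 (R : realType) (b : nat) (d : 'I_b) k :
  mu_term d k (`[0, 1[ : set R) 0 = (k == 0)%:R.
Proof.
rewrite mu_term_0 /indic mem_set ?mulr1 //=.
by rewrite in_itv /= lexx ltr01.
Qed.

Lemma term01_S (R : realType) (b : nat) (d : 'I_b) k l :
  mu_term d k (`[0, 1[ : set R) l.+1 = b%:R^-1 *
   ((if k is k'.+1 then mu_term d k' `[0, 1[ l else 0)
     + (b.-1)%:R * mu_term d k `[0, 1[ l).
Proof.
have b0 : (0 < b)%N := leq_ltn_trans (leq0n _) (ltn_ord d).
rewrite mu_term_S //; congr (_ * _); rewrite -(@sum_if R b d); apply: eq_bigr => e _.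
by rewrite !term_shift01; case: k => [|k] //; rewrite term_shift01.
Qed.

Lemma psum01 (R : realType) (b : nat) (d : 'I_b) n k :
  \sum_(l < n) mu_term d k (`[0, 1[ : set R) l <= b%:R.
Proof.
have b0 : (0 < b)%N := leq_ltn_trans (leq0n _) (ltn_ord d).
have bR : 0 < b%:R :> R by rewrite ltr0n.
have hb1 : (b.-1)%:R = (b%:R - 1 : R) by rewrite -subn1 natrB.
elim: n k => [|n IH] k; first by rewrite big_ord0 ler0n.
rewrite big_ord_recl term01_0.
under eq_bigr => i _ do rewrite term01_S.
rewrite -mulr_sumr big_split /= -mulr_sumr hb1.
have Hk := IH k.
case: k Hk => [|k] Hk /=.
  rewrite big1 // add0r.
  set S := \sum_(i < n) _.
  have HS : S <= b%:R := Hk.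
  have : 1 <= (b%:R : R) by rewrite ler1n.
  have h : b%:R^-1 * ((b%:R - 1) * S) <= b%:R - 1.
    rewrite ler_pdivrMl //; have : 1 <= (b%:R : R) by rewrite ler1n.
    move=> ?; nra.
  move=> ?; lra.
rewrite add0r ler_pdivrMl //.
have H1 := IH k; have : 1 <= (b%:R : R) by rewrite ler1n.
move: H1 Hk; set S1 := \sum_(i < n) mu_term d k _ _; set S2 := \sum_(i < n) _.
move=> H1 H2 ?; nra.
Qed.

Lemma mu01_le (R : realType) (b : nat) (d : 'I_b) k :
  (mu d k (`[0%R, 1%R[ : set R) <= (b%:R)%:E)%E.
Proof.
rewrite /mu; apply: lime_le.
  by apply: is_cvg_nneseries => l _ _; rewrite lee_fin mu_term_ge0.
apply: nearW => n /=; rewrite sumEFin lee_fin big_mkord; exact: psum01.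
Qed.

Lemma mu01_fin (R : realType) (b : nat) (d : 'I_b) k :
  mu d k (`[0%R, 1%R[ : set R) = (fine (mu d k (`[0%R, 1%R[ : set R)))%:E.
Proof.
by rewrite fineK // ge0_fin_numE ?mu_ge0 // (le_lt_trans (@mu01_le R b d k)) ?ltry.
Qed.

Lemma mu01_rec (R : realType) (b : nat) (d : 'I_b) k :
  let f k := fine (mu d k (`[0%R, 1%R[ : set R)) in
  f k = (k == 0)%:R + b%:R^-1 *
     ((if k is k'.+1 then f k' else 0) + (b.-1)%:R * f k).
Proof.
move=> f.
have b0 : (0 < b)%N := leq_ltn_trans (leq0n _) (ltn_ord d).
have E := @mu_S R b d k `[0%R, 1%R[ b0.
rewrite term01_0 in E.
have S : (\sum_(e < b) (if e == d then (if k is k'.+1 then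
    mu d k' (shiftA b e `[0%R, 1%R[) else 0%E) else mu d k (shiftA b e `[0%R, 1%R[)) =
   \sum_(e < b) (if e == d then (if k is k'.+1 then f k' else 0) else f k)%:E)%E.
  apply: eq_bigr => e _.
  rewrite (@mu_ext R b d k _ `[0%R, 1%R[ b0 (@shift01 R b e)) mu01_fin.
  case: ifP => //; case: k {E} => [|k] //.
  by rewrite (@mu_ext R b d k _ `[0%R, 1%R[ b0 (@shift01 R b e)) mu01_fin.
rewrite S sumEFin (@sum_if R b d) -EFinM -EFinD mu01_fin in E.
by case: E.
Qed.

Lemma mu01 (R : realType) (b : nat) (d : 'I_b) k :
  mu d k (`[0%R, 1%R[ : set R) = (b%:R)%:E.
Proof.
have b0 : (0 < b)%N := leq_ltn_trans (leq0n _) (ltn_ord d).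
have bR : 0 < b%:R :> R by rewrite ltr0n.
have hb1 : (b.-1)%:R = (b%:R - 1 : R) by rewrite -subn1 natrB.
rewrite mu01_fin; congr (_%:E).
elim: k => [|k IH].
  have := @mu01_rec R b d 0; rewrite /= hb1 => E.
  set f := fine _ in E *.
  have : b%:R * f = b%:R + (b%:R - 1) * f.
    by rewrite {1}E; field; rewrite gt_eqF.
  lra.
have := @mu01_rec R b d k.+1; rewrite /= hb1 IH => E.
set f := fine _ in E *.
have : b%:R * f = b%:R + (b%:R - 1) * f.
  by rewrite {1}E; field; rewrite gt_eqF.
lra.
Qed.

Definition cell (R : realType) (b j n : nat) : set R :=
  `[(j%:R / b%:R ^+ n), (j.+1%:R / b%:R ^+ n)[.

Lemma in_cell (R : realType) (b j n : nat) (x : R) : (0 < b)%N ->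
  cell R b j n x <-> j%:R <= x * b%:R ^+ n /\ x * b%:R ^+ n < j.+1%:R.
Proof.
move=> b0; have N0 : 0 < b%:R ^+ n :> R by rewrite exprn_gt0 // ltr0n.
rewrite /cell /= in_itv /= ler_pdivrMr // ltr_pdivlMr //.
by split => [/andP[]|[-> ->]].
Qed.

Lemma in_shift_cell (R : realType) (b e j n : nat) (x : R) : (0 < b)%N ->
  shiftA b e (cell R b j n.+1) x <->
  j%:R <= (e%:R + x) * b%:R ^+ n /\ (e%:R + x) * b%:R ^+ n < j.+1%:R.
Proof.
move=> b0; have bR : 0 < b%:R :> R by rewrite ltr0n.
rewrite /shiftA /= -/(cell R b j n.+1 _) in_cell // exprS.
rewrite mulrCA mulrA (_ : b%:R * ((e%:R + x) / b%:R) = e%:R + x) //.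
by field; rewrite gt_eqF.
Qed.

Lemma shift_out (R : realType) (e e0 j' : nat) (N x : R) :
  e != e0 -> 0 <= x -> x < 1 -> 0 < N -> j'.+1%:R <= N ->
  ~ ((e0%:R * N + j'%:R) <= (e%:R + x) * N /\
     (e%:R + x) * N < (e0%:R * N + j'%:R) + 1).
Proof.
move=> ne x0 x1 N0 jN [h1 h2].
have xN : x * N < N by rewrite -[X in _ < X]mul1r ltr_pM2r.
have xN0 : 0 <= x * N by rewrite mulr_ge0 // ltW.
have j1 : (j'%:R : R) + 1 <= N by rewrite -(natrD R j' 1) addn1.
case: (ltngtP e e0) ne => // [lt|gt] _.
  have : (e%:R + 1) * N <= e0%:R * N :> R.
    by rewrite ler_pM2r // -(natrD R e 1) ler_nat addn1.
  have : (0 : R) <= j'%:R by rewrite ler0n.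
  move: h1; rewrite mulrDl; move=> *; lra.
have : (e0%:R + 1) * N <= e%:R * N :> R.
  by rewrite ler_pM2r // -(natrD R e0 1) ler_nat addn1.
move: h2; rewrite mulrDl; move=> *; lra.
Qed.

Lemma mu_cell (R : realType) (b : nat) (d : 'I_b) n : forall k j,
  (n <= k)%N -> (j < b ^ n)%N ->
  mu d k (cell R b j n) = (b%:R / b%:R ^+ n)%:E.
Proof.
have b0 : (0 < b)%N := leq_ltn_trans (leq0n _) (ltn_ord d).
have bR : 0 < b%:R :> R by rewrite ltr0n.
elim: n => [|n IH] k j hk hj.
  move: hj; rewrite expn0 ltnS leqn0 => /eqP ->.
  rewrite expr0 divr1 -(@mu01 R b d k); apply: mu_ext => // x h0 h1.
  rewrite in_cell // expr0 mulr1 /= in_itv /= h0 h1; split => // _.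
case: k hk => [|k] // hk.
have N0 : 0 < b%:R ^+ n :> R by rewrite exprn_gt0.
have hj' : (j %% b ^ n < b ^ n)%N by rewrite ltn_pmod // expn_gt0 b0.
have he0 : (j %/ b ^ n < b)%N.
  by rewrite ltn_divLR ?expn_gt0 ?b0 // -expnS.
set j' := (j %% b ^ n)%N in hj'.
pose e0 : 'I_b := Ordinal he0.
have jE : j%:R = (e0 : nat)%:R * b%:R ^+ n + j'%:R :> R.
  by rewrite {1}(divn_eq j (b ^ n)) natrD natrM natrX.
have jN : j'.+1%:R <= b%:R ^+ n :> R by rewrite -natrX ler_nat.
have shE : forall x : R, 0 <= x -> x < 1 ->
    (shiftA b e0 (cell R b j n.+1) x <-> cell R b j' n x).
  move=> x h0 h1; rewrite in_shift_cell // in_cell // -(addn1 j) -(addn1 j') !natrD jE mulrDl.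
  by split => -[? ?]; split; lra.
have IHk : forall k', (n <= k')%N -> mu d k' (shiftA b e0 (cell R b j n.+1)) =
    (b%:R / b%:R ^+ n)%:E.
  by move=> k' hk'; rewrite -(IH k' j' hk' hj'); apply: mu_ext.
rewrite mu_S // mu_term_0 /= mul0r add0e.
rewrite (bigD1 e0) //= big1 ?adde0; last first.
  move=> e ne; have ne' : (e : nat) != e0 by [].
  have out : forall k', mu d k' (shiftA b e (cell R b j n.+1)) = 0%E.
    move=> k'; apply: mu_set0 => // x h0 h1.
    rewrite in_shift_cell // -(addn1 j) natrD jE.
    exact: (@shift_out R e e0 j' _ x ne' h0 h1 N0 jN).
  by case: ifP => _; rewrite out.
have -> : (if e0 == d then mu d k (shiftA b e0 (cell R b j n.+1))
    else mu d k.+1 (shiftA b e0 (cell R b j n.+1))) = (b%:R / b%:R ^+ n)%:E.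
  by case: ifP => _; [rewrite IHk | rewrite IHk // ltnW].
rewrite -EFinM exprS; congr (_%:E); field.
by rewrite !gt_eqF.
Qed.

Lemma mu_add (R : realType) (b : nat) (d : 'I_b) k (A B : set R) :
  (forall x, ~ (A x /\ B x)) -> mu d k (A `|` B) = (mu d k A + mu d k B)%E.
Proof.
move=> AB; rewrite /mu -nneseriesD; last 2 first.
- by move=> l _ _; rewrite lee_fin mu_term_ge0.
- by move=> l _ _; rewrite lee_fin mu_term_ge0.
apply: eq_eseriesr => l _; rewrite -EFinD; congr (_%:E).
rewrite /mu_term -big_split; apply: eq_bigr => X _ /=; rewrite -mulrDr.
congr (_ * _); set x := (_ / _).
rewrite !indicE in_setU.
have [ha|ha] := boolP (x \in A); have [hb|hb] := boolP (x \in B) => //=.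
- by exfalso; apply: (AB x); split; apply: set_mem.
- by rewrite addr0.
- by rewrite add0r.
- by rewrite addr0.
Qed.

Lemma mu_itv (R : realType) (b : nat) (d : 'I_b) n k p : (n <= k)%N ->
  forall q, (p <= q)%N -> (q <= b ^ n)%N ->
  mu d k (`[(p%:R / b%:R ^+ n), (q%:R / b%:R ^+ n)[ : set R) =
  ((q - p)%:R * (b%:R / b%:R ^+ n))%:E.
Proof.
move=> hk; have b0 : (0 < b)%N := leq_ltn_trans (leq0n _) (ltn_ord d).
have N0 : 0 < b%:R ^+ n :> R by rewrite exprn_gt0 // ltr0n.
elim=> [|q IH] hpq hq.
  move: hpq; rewrite leqn0 => /eqP ->; rewrite subnn.
  have -> : ((0%N)%:R * (b%:R / b%:R ^+ n) : R) = 0 by rewrite mul0r.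
  apply: mu_set0 => // x _ _ /=; rewrite in_itv /= => /andP[h1 h2].
  by move: (le_lt_trans h1 h2); rewrite ltxx.
case: (ltnP p q.+1) hpq => [hpq _ | hqp hpq]; last first.
  have -> : p = q.+1 by apply/eqP; rewrite eqn_leq hpq hqp.
  rewrite subnn mul0r; apply: mu_set0 => // x _ _ /=; rewrite in_itv /= => /andP[h1 h2].
  by move: (le_lt_trans h1 h2); rewrite ltxx.
rewrite ltnS in hpq.
rewrite (@mu_ext R b d k _ (`[(p%:R / b%:R ^+ n), (q%:R / b%:R ^+ n)[ `|` cell R b q n) b0).
  rewrite mu_add; last first.
    move=> x [] /=; rewrite in_itv /= => /andP[_ h] /(@in_cell R b q n x b0) [h' _].
    by move: h; rewrite ltr_pdivlMr // ltNge h'.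
  rewrite IH ?(ltnW hq) // (@mu_cell R b d n k q hk hq).
  rewrite -EFinD; congr (_%:E); rewrite subSn // mulrSr mulrDl mul1r.
  done.
move=> x _ _; split.
  rewrite /= !in_itv /= => /andP[h1 h2].
  have [hx|hx] := ltP x (q%:R / b%:R ^+ n); [left | right].
    by rewrite h1.
  by rewrite /cell /= in_itv /= hx h2.
move=> [] /=; rewrite !in_itv /=.
  move=> /andP[h1 h]; apply/andP; split => //; apply: (lt_trans h).
  by rewrite ltr_pM2r ?invr_gt0 // ltr_nat.
rewrite /cell /= in_itv /= => /andP[h1 h]; apply/andP; split.
  by apply: le_trans h1; rewrite ler_pM2r ?invr_gt0 // ler_nat.
done.
Qed.

Lemma nat_of_mul (R : realType) (N t : R) (z : int) :
  0 < N -> 0 <= t -> N * t = z%:~R -> exists p : nat, t = p%:R / N.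
Proof.
move=> N0 t0; case: z => [p|p] E.
  by exists p; rewrite pmulrn -E [N * t]mulrC mulfK ?gt_eqF.
exfalso; have : 0 <= N * t by rewrite mulr_ge0 // ltW.
by rewrite E NegzE mulrNz lerNr oppr0 -[_ <= _]negbK -ltNge ltr0n.
Qed.

Lemma part1 (R : realType) (b : nat) (d : 'I_b) (t u : R) (l' : nat) :
     0 <= t -> t < u -> u <= 1 ->
     (exists z : int, b%:R ^+ l' * t = z%:~R) ->
     (exists z : int, b%:R ^+ l' * u = z%:~R) ->
     forall k : nat, (l' <= k)%N ->
       mu d k `[t, u[ = (b%:R * (u - t))%:E.
Proof.
move=> t0 tu u1 [z1 h1] [z2 h2] k hk.
have b0 : (0 < b)%N := leq_ltn_trans (leq0n _) (ltn_ord d).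
have N0 : 0 < b%:R ^+ l' :> R by rewrite exprn_gt0 // ltr0n.
have Ni : 0 < (b%:R ^+ l' : R)^-1 by rewrite invr_gt0.
have [p hp] := @nat_of_mul R _ _ _ N0 t0 h1.
have [q hq] := @nat_of_mul R _ _ _ N0 (le_trans t0 (ltW tu)) h2.
have pq : (p <= q)%N.
  by rewrite -(ler_nat R) -(ler_pM2r Ni) -hp -hq ltW.
have qN : (q <= b ^ l')%N.
  rewrite -(ler_nat R) natrX -(ler_pM2r Ni) -hq mulfV ?gt_eqF //.
rewrite hp hq (@mu_itv R b d l' k p hk q pq qN); congr (_%:E).
rewrite natrB //; field; by rewrite gt_eqF.
Qed.

Lemma bounds (R : realType) (b : nat) (d : 'I_b) (S : set R) (a c : R) n k :
  (n <= k)%N -> 0 <= a -> a < 1 -> a <= c -> c <= 1 ->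
  (forall x, S x -> a <= x <= c) -> (forall x, S x -> x < 1) ->
  (forall x, a < x < c -> S x) ->
  let N := b%:R ^+ n : R in
  (((b%:R / N) * (c * N - a * N - 2))%:E <= mu d k S)%E /\
  (mu d k S <= ((b%:R / N) * (c * N - a * N + 2))%:E)%E.
Proof.
move=> hk a0 a1 ac c1 Sac S1 Sin N.
have b0 : (0 < b)%N := leq_ltn_trans (leq0n _) (ltn_ord d).
have bR : 0 < b%:R :> R by rewrite ltr0n.
have N0 : 0 < N by rewrite exprn_gt0.
have bN : 0 < b%:R / N by rewrite divr_gt0.
have Nz : N != 0 by rewrite gt_eqF.
set A := a * N; set C := c * N.
have A0 : 0 <= A by rewrite mulr_ge0 // ltW.
have AC : A <= C by rewrite ler_pM2r.
have CN : C <= N by rewrite /C -[X in _ <= X]mul1r ler_pM2r.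
have AN : A < N by rewrite /A -[X in _ < X]mul1r ltr_pM2r.
have fA := floor_itv A; have fC := floor_itv C.
split.
-
  set P := (Num.floor A + 1)%:~R : R; set Q := (Num.floor C)%:~R : R.
  have [hP1 hP2] : A < P /\ P <= A + 1.
    by rewrite /P intrD; move: fA; rewrite intrD => /andP[? ?]; split => //; lra.
  have [hQ1 hQ2] : C - 1 < Q /\ Q <= C.
    by move: fC; rewrite intrD => /andP[? ?]; split => //; lra.
  have [PQ|QP] := ltP P Q; last first.
    apply: le_trans (@mu_ge0 R b d k S); rewrite lee_fin.
    rewrite pmulr_rle0 //; lra.
  have tE : N * (P / N) = (Num.floor A + 1)%:~R by rewrite mulrC divfK.
  have uE : N * (Q / N) = (Num.floor C)%:~R by rewrite mulrC divfK.
  have t0 : 0 <= P / N by rewrite divr_ge0 //; lra.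
  have tu : P / N < Q / N by rewrite ltr_pM2r ?invr_gt0.
  have u1 : Q / N <= 1 by rewrite ler_pdivrMr // mul1r; lra.
  have E := (@part1 R b d _ _ n t0 tu u1 (ex_intro _ _ tE) (ex_intro _ _ uE) k hk).
  apply: (@le_trans _ _ (mu d k `[P / N, Q / N[)); last first.
    apply: mu_le => // x _ _ /=; rewrite in_itv /= => /andP[h1 h2]; apply: Sin.
    apply/andP; split.
      apply: lt_le_trans h1; rewrite ltr_pdivlMr // -/A; lra.
    apply: lt_le_trans h2 _; rewrite ler_pdivrMr // -/C; lra.
  rewrite E lee_fin (_ : b%:R * (Q / N - P / N) = (b%:R / N) * (Q - P)).
    by rewrite ler_pM2l //; lra.
  by field.
-
  set P := (Num.floor A)%:~R : R.
  have [hP1 hP2] : P <= A /\ A - 1 < P.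
    by move: fA; rewrite intrD => /andP[? ?]; split => //; lra.
  have P0 : 0 <= P by rewrite /P ler0z floor_ge0.
  have tE : N * (P / N) = (Num.floor A)%:~R by rewrite mulrC divfK.
  have t0 : 0 <= P / N by rewrite divr_ge0 // ltW.
  have [Q [hQ1 [hQ2 [hQ3 [[z hz] hQ5]]]]] : exists Q, P < Q /\ Q <= N /\
      Q <= C + 1 /\ (exists z : int, N * (Q / N) = z%:~R) /\
      (forall x, S x -> x * N < Q).
    have [c1'|c1'] := ltP c 1.
    + exists (Num.floor C + 1)%:~R.
      have [hQ1 hQ2] : C < (Num.floor C + 1)%:~R /\ (Num.floor C + 1)%:~R <= C + 1 :> R.
        by move: fC; rewrite intrD => /andP[? ?]; split => //; lra.
      have CN' : C < N by rewrite /C -[X in _ < X]mul1r ltr_pM2r.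
      split; first lra.
      split.
        have : Num.floor C < (b ^ n)%:Z by rewrite floor_lt_int -pmulrn natrX.
        rewrite -lezD1 -(ler_int R) => h; apply: le_trans h _.
        by rewrite /N -pmulrn natrX.
      split => //; split; first by exists (Num.floor C + 1); rewrite mulrC divfK.
      move=> x Sx; have /andP[_ xc] := Sac x Sx.
      apply: le_lt_trans hQ1; rewrite /C ler_pM2r //.
    + exists N; have cE : c = 1 by apply/le_anti/andP.
      have CE : C = N by rewrite /C cE mul1r.
      split; first lra.
      split => //; split; first lra.
      split; first by exists (b ^ n)%:Z; rewrite divff // mulr1 -pmulrn natrX.
      move=> x Sx; rewrite -[X in _ < X]mul1r ltr_pM2r //; exact: S1.
  have tu : P / N < Q / N by rewrite ltr_pM2r ?invr_gt0.
  have u1 : Q / N <= 1 by rewrite ler_pdivrMr // mul1r.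
  have E := (@part1 R b d _ _ n t0 tu u1 (ex_intro _ _ tE) (ex_intro _ _ hz) k hk).
  apply: (@le_trans _ _ (mu d k `[P / N, Q / N[)).
    apply: mu_le => // x _ _ Sx /=; rewrite in_itv /=; apply/andP; split.
      rewrite ler_pdivrMr //; have /andP[ax _] := Sac x Sx.
      by apply: le_trans hP1 _; rewrite /A ler_pM2r.
    by rewrite ltr_pdivlMr // hQ5.
  rewrite E lee_fin (_ : b%:R * (Q / N - P / N) = (b%:R / N) * (Q - P)).
    by rewrite ler_pM2l //; lra.
  by field.
Qed.

Lemma part2 (R : realType) (b : nat) (d : 'I_b) (hb : (2 <= b)%N) :
  forall I : interval R, [set` I] `<=` `[0, 1[ ->
     ((fun k => mu d k [set` I]) @ \oo --> (b%:R * ilength I)%:E)%E.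
Proof.
move=> I HI.
have b0 : (0 < b)%N := leq_ltn_trans (leq0n _) (ltn_ord d).
have bR : 0 < b%:R :> R by rewrite ltr0n.
set S := [set` I].
have S01 : forall x, S x -> 0 <= x /\ x < 1.
  by move=> x /HI /=; rewrite in_itv /= => /andP[].
have [[x0 Sx0]|S0] := pselect (exists x, S x); last first.
  have SE : S = set0.
    by apply/seteqP; split => x // Sx; apply: S0; exists x.
  rewrite /ilength -/S SE sup0 inf0 subrr mulr0.
  apply: cvg_near_cst; apply: nearW => k.
  by apply: mu_set0 => // x _ _ [].
have hsup : has_sup S.
  split; first by exists x0.
  by exists 1 => y /S01 [_ /ltW].
have hinf : has_inf S.
  split; first by exists x0.
  by exists 0 => y /S01 [].
set a := inf S; set c := sup S.
have Sa : forall x, S x -> a <= x by move=> x Sx; apply: ge_inf => //; case: hinf.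
have Sc : forall x, S x -> x <= c by move=> x Sx; apply: sup_upper_bound.
have a0 : 0 <= a by apply: lb_le_inf; [exists x0 | move=> y /S01 []].
have c1 : c <= 1 by apply: ge_sup; [exists x0 | move=> y /S01 [_ /ltW]].
have a1 : a < 1 by apply: le_lt_trans (Sa _ Sx0) _; case: (S01 _ Sx0).
have ac : a <= c by apply: le_trans (Sa _ Sx0) (Sc _ Sx0).
have Sac : forall x, S x -> a <= x <= c by move=> x Sx; rewrite Sa // Sc.
have S1 : forall x, S x -> x < 1 by move=> x /S01 [].
have Sin : forall x, a < x < c -> S x.
  move=> x /andP[ax xc].
  have ha : 0 < x - a by rewrite subr_gt0.
  have hc : 0 < c - x by rewrite subr_gt0.
  have [e1 Se1 h1] := @inf_adherent R S (x - a) ha hinf.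
  have [e2 Se2 h2] := @sup_adherent R S (c - x) hc hsup.
  apply: (@interval_is_interval R I e1 e2 Se1 Se2 x).
  rewrite -/a -/c in h1 h2.
  apply/andP; split; apply: ltW; lra.
have fin : forall k, mu d k S = (fine (mu d k S))%:E.
  move=> k; have [_ U] := @bounds R b d S a c 0 k (leq0n k) a0 a1 ac c1 Sac S1 Sin.
  by rewrite fineK // ge0_fin_numE ?mu_ge0 // (le_lt_trans U) ?ltry.
rewrite /ilength -/S -/a -/c.
apply: cvg_EFin; first by apply: nearW => k; rewrite fin.
apply/cvgrPdist_le => eps eps0.
have [n hn] : exists n : nat, 2 * b%:R / eps < (b ^ n)%:R :> R.
  exists (Num.bound (2 * b%:R / eps)); apply: lt_le_trans (archi_boundP _) _.
    by rewrite divr_ge0 // ?ltW // mulr_ge0 // ler0n.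
  by rewrite ler_nat ltnW // ltn_expl.
exists n => // k /= hk.
have [L U] := @bounds R b d S a c n k hk a0 a1 ac c1 Sac S1 Sin.
rewrite fin lee_fin in L; rewrite fin lee_fin in U.
move: L U; set m := fine (mu d k S); set N := b%:R ^+ n => L U.
rewrite natrX -/N in hn.
have N0 : 0 < N by rewrite exprn_gt0.
have E1 : (b%:R / N) * (c * N - a * N - 2) = b%:R * (c - a) - 2 * b%:R / N.
  by field; rewrite gt_eqF.
have E2 : (b%:R / N) * (c * N - a * N + 2) = b%:R * (c - a) + 2 * b%:R / N.
  by field; rewrite gt_eqF.
have he : 2 * b%:R / N < eps.
  move: hn; rewrite ltr_pdivrMr // => hn; rewrite ltr_pdivrMr //.
  by rewrite [eps * N]mulrC.
rewrite E1 in L; rewrite E2 in U.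
rewrite ler_norml; apply/andP; split; lra.
Qed.


Theorem mainTheorem15 (R : realType) (b : nat) (d : 'I_b) (hb : (2 <= b)%N) :
  (forall (t u : R) (l' : nat),
     0 <= t -> t < u -> u <= 1 ->
     (exists z : int, b%:R ^+ l' * t = z%:~R) ->
     (exists z : int, b%:R ^+ l' * u = z%:~R) ->
     forall k : nat, (l' <= k)%N ->
       mu d k `[t, u[ = (b%:R * (u - t))%:E)
  /\
  (forall I : interval R, [set` I] `<=` `[0, 1[ ->
     ((fun k => mu d k [set` I]) @ \oo --> (b%:R * ilength I)%:E)%E).
Proof.
split; first exact: (@part1 R b d).
exact: (@part2 R b d hb).
Qed.
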